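(* Let $\mathbf{E}\subseteq\mathbf{A}$ be finite symmetric integral relation algebras. For every $n\in\omega$, the set $$\{1'\}\cup\{x^{(i)}:x\text{ a diversity atom of }\mathbf{A},\ i<n\}\cup\{J(a,n):a\text{ a diversity atom of }\mathbf{A}\}$$ is the set of atoms of a subalgebra of $\mathbf{C}_{\mathbf{E}}(\mathbf{A})$.
   Context: Relation algebras are in the sense of Tarski; $1'$ identity, $0'$ its complement, $;$ relative product; integral: $1'$ is an atom; symmetric: $x^{\smile}=x$; a diversity atom is an atom below $0'$. The algebra $\mathbf{C}_{\mathbf{E}}(\mathbf{A})$: for each atom $x$ of $\mathbf{A}$ let $c(x)$ be the atom of $\mathbf{E}$ with $x\le c(x)$; $T(i,j,k)$ iff $(i\le j=k)$ or $(j\le k=i)$ or $(k\le i=j)$. Atoms: $1'$ and $x^{(i)}$ for diversity atoms $x$ of $\mathbf{A}$ and $i\in\omega$ (distinct formal symbols). $C$ is the set of all permutations of $(1',1',1')$, $(1',x^{(i)},x^{(i)})$, and $(x^{(i)},y^{(j)},z^{(k)})$ with $x;y\ge z$ in $\mathbf{A}$ and ($c(x)=c(y)=c(z)\Rightarrow T(i,j,k)$). $\mathbf{C}_{\mathbf{E}}(\mathbf{A})$ is the algebra of all sets of atoms with set Boolean operations, identity $\{1'\}$, converse the identity map, and $X;Y=\{w:\exists u\in X,\exists v\in Y,(u,v,w)\in C\}$. For $a\in\mathbf{A}$ and $n\in\omega$, $J(a,n)$ is the join of all $x^{(i)}$ with $x$ a diversity atom of $\mathbf{A}$, $x\le a$,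 $n\le i$, together with $1'$ if $1'\le a$. *)

(* Defs.v *)
From mathcomp Require Import all_boot.
From mathcomp Require Import classical_sets.
From Stdlib Require Import ClassicalEpsilon.

Set Implicit Arguments.
Unset Strict Implicit.
Unset Printing Implicit Defensive.

Local Open Scope classical_set_scope.

Record ra_ops (T : Type) := RAOps {
  ra_join  : T -> T -> T;
  ra_compl : T -> T;
  ra_comp  : T -> T -> T;
  ra_conv  : T -> T;
  ra_id    : T }.

Section RA.
Variables (T : Type) (o : ra_ops T).
Local Notation j := (ra_join o).
Local Notation n := (ra_compl o).
Local Notation m := (ra_comp o).
Local Notation cv := (ra_conv o).
Local Notation e := (ra_id o).

(* Tarski's axioms R1--R10. *)
Definition is_RA : Prop :=
     (forall x y, j x y = j y x)
  /\ (forall x y z, j x (j y z) = j (j x y) z)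
  /\ (forall x y, j (n (j (n x) y)) (n (j (n x) (n y))) = x)
  /\ (forall x y z, m x (m y z) = m (m x y) z)
  /\ (forall x y z, m (j x y) z = j (m x z) (m y z))
  /\ (forall x, m x e = x)
  /\ (forall x, cv (cv x) = x)
  /\ (forall x y, cv (j x y) = j (cv x) (cv y))
  /\ (forall x y, cv (m x y) = m (cv y) (cv x))
  /\ (forall x y, j (m (cv x) (n (m x y))) (n y) = n y).

Definition ra_le (x y : T) : Prop := j x y = y.
Definition ra_one : T := j e (n e).
Definition ra_zero : T := n ra_one.
Definition ra_div : T := n e.

Definition ra_atom (x : T) : Prop :=
  x <> ra_zero /\ forall y, ra_le y x -> y = ra_zero \/ y = x.
Definition div_atom (x : T) : Prop := ra_atom x /\ ra_le x ra_div.

Definition ra_integral : Prop := ra_atom e.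
Definition ra_symmetric : Prop := forall x, cv x = x.

Definition is_subRA (E : T -> Prop) : Prop :=
  [/\ E e,
      (forall x y, E x -> E y -> E (j x y)),
      (forall x, E x -> E (n x)),
      (forall x y, E x -> E y -> E (m x y)) &
      (forall x, E x -> E (cv x))].

Definition sub_atom (E : T -> Prop) (x : T) : Prop :=
  [/\ E x, x <> ra_zero &
      forall y, E y -> ra_le y x -> y = ra_zero \/ y = x].
End RA.

(* Atoms of C_E(A): 1' and formal symbols x^(i), x a diversity atom of A. *)
Inductive catom (T : Type) (P : T -> Prop) : Type :=
| CI : catom P
| CX : {x : T | P x} -> nat -> catom P.
Arguments CI {T P}.

Section CE.
Variables (T : Type) (o : ra_ops T) (E : T -> Prop).
Local Notation At := (catom (div_atom o)).

Definition cE (x : T) : T :=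
  epsilon (inhabits (ra_id o)) (fun y => sub_atom o E y /\ ra_le o x y).

Definition Tcond (i j k : nat) : Prop :=
  ((i <= j)%N /\ j = k) \/ ((j <= k)%N /\ k = i) \/ ((k <= i)%N /\ i = j).

(* the generating triples (before closing under permutations) *)
Definition Cbase (u v w : At) : Prop :=
  match u, v, w with
  | CI, CI, CI => True
  | CI, CX x i, CX y j => proj1_sig x = proj1_sig y /\ i = j
  | CX x i, CX y j, CX z k =>
      ra_le o (proj1_sig z) (ra_comp o (proj1_sig x) (proj1_sig y)) /\
      (cE (proj1_sig x) = cE (proj1_sig y) /\ cE (proj1_sig y) = cE (proj1_sig z)
         -> Tcond i j k)
  | _, _, _ => False
  end.

Definition Crel (u v w : At) : Prop :=
  Cbase u v w \/ Cbase u w v \/ Cbase v u w \/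
  Cbase v w u \/ Cbase w u v \/ Cbase w v u.

(* operations of the complex algebra C_E(A) on sets of atoms *)
Definition cid : set At := [set CI].
Definition cconv (X : set At) : set At := X.
Definition ccomp (X Y : set At) : set At :=
  [set w | exists u v, X u /\ Y v /\ Crel u v w].

Definition is_subalg (B : set (set At)) : Prop :=
  [/\ B cid,
      (forall X Y, B X -> B Y -> B (X `|` Y)),
      (forall X, B X -> B (~` X)),
      (forall X, B X -> B (cconv X)) &
      (forall X Y, B X -> B Y -> B (ccomp X Y))].

Definition atoms_of (B : set (set At)) : set (set At) :=
  [set X | [/\ B X, X <> set0 &
            forall Y, B Y -> Y `<=` X -> Y = set0 \/ Y = X]].

Definition J (a : T) (n : nat) : set At :=
  [set w | match w with
           | CI => ra_le o (ra_id o) a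
           | CX x i => ra_le o (proj1_sig x) a /\ (n <= i)%N
           end].
End CE.

Arguments is_subalg {T} o E B.
Arguments J {T} o a n _.
Arguments cid {T} o _.
Arguments ccomp {T} o E X Y _.

(* Main.v *)
Require Import Defs.
From mathcomp Require Import all_boot.
From mathcomp Require Import classical_sets.
From mathcomp Require Import zify.
From mathcomp Require boolp.
From Stdlib Require Classical_Prop.
Local Open Scope classical_set_scope.

Set Implicit Arguments.
Unset Strict Implicit.
Unset Printing Implicit Defensive.

Section Help.
Variables (T : finType) (o : ra_ops T).
Hypothesis hRA : is_RA o.
Hypothesis hS : ra_symmetric o.
Local Notation j := (ra_join o).
Local Notation n := (ra_compl o).
Local Notation m := (ra_comp o).
Local Notation cv := (ra_conv o).
Local Notation e := (ra_id o).

Lemma idem x : j x x = x.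
Proof.
case: hRA => C [A [H [_ [_ [R6 [_ [_ [R9 R10]]]]]]]].
have Le : forall z, m e z = z.
  move=> z; by rewrite -{1}(hS (m e z)) R9 !hS R6.
have iN : forall y, j (n y) (n y) = n y.
  move=> y; have := R10 e y; by rewrite hS !Le.
have g2 : forall a b, j (j (n a) (n b)) (j (n a) (n b)) = j (n a) (n b).
  move=> a b.
  rewrite -A (A (n b) (n a) (n b)) (C (n b) (n a)) -A iN A iN //.
by rewrite -{1 2}(H x x) g2 H.
Qed.

Lemma e_not_le_div a : ra_integral o -> div_atom o a -> ~ ra_le o e a.
Proof.
move=> hI [[_ ha] hae] hle.
have hIe := hI; case: hIe => enz _.
case: (ha e hle) => [//|ea].
subst a.
case: hRA => C [A [H _]].
move: hae; rewrite /ra_le /ra_div => hae.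
apply: enz; rewrite /ra_zero /ra_one hae.
have := H e e; rewrite (C (n e) e) hae idem.
by rewrite idem.
Qed.

Lemma le_atom_eq a x : ra_atom o a -> ra_atom o x -> ra_le o x a -> x = a.
Proof.
move=> [_ ha] [xnz _] hle; by case: (ha x hle).
Qed.
End Help.

Section Main.
Variables (T : finType) (o : ra_ops T) (E : T -> Prop) (n : nat).
Local Notation At := (catom (div_atom o)).

Definition sat (X : set At) : Prop :=
  forall x i k, (n <= i)%N -> (n <= k)%N -> X (CX x i) -> X (CX x k).

Lemma sat_comp X Y : sat X -> sat Y -> sat (ccomp o E X Y).
Proof.
move=> sX sY z i k hi hk [u [v [Xu [Yv Cr]]]].
pose g t := if (t < n)%N then t else k.
pose G (w : At) : At := match w with CI => CI | CX x t => CX x (g t) end.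
have gmono : forall a b, (a <= b)%N -> (g a <= g b)%N.
  move=> a b ab; rewrite /g; case: ifP => h1; case: ifP => h2; lia.
have gT : forall a b c, Tcond a b c -> Tcond (g a) (g b) (g c).
  move=> a b c [[h1 h2]|[[h1 h2]|[h1 h2]]]; [left|right;left|right;right];
    split; try (apply: gmono; exact: h1); by rewrite h2.
have GB : forall a b c, Cbase E a b c -> Cbase E (G a) (G b) (G c).
  case=> [|x a] [|y b] [|w c] //=.
  - by move=> [h1 ->].
  - by move=> [h1 h2]; split => // /h2; apply: gT.
have GC : forall a b c, Crel E a b c -> Crel E (G a) (G b) (G c).
  move=> a b c [h|[h|[h|[h|[h|h]]]]]; rewrite /Crel;
    [left|right;left|right;right;left|do 3 right;left|do 4 right;left|do 5 right];
    exact: GB.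
have GX : forall W, sat W -> forall a, W a -> W (G a).
  move=> W sW [|x t] //= Wt; rewrite /g; case: ifP => // ht.
  apply: (sW x t) => //; lia.
have -> : CX z k = G (CX z i) by rewrite /= /g ltnNge hi.
exists (G u), (G v); split; [exact: GX|split; [exact: GX|exact: GC]].
Qed.

Lemma sig_eq (x y : {x : T | div_atom o x}) : proj1_sig x = proj1_sig y -> x = y.
Proof.
case: x => x px; case: y => y py /= exy; subst y.
by rewrite (boolp.Prop_irrelevance px py).
Qed.

End Main.

Theorem lemma5 (T : finType) (o : ra_ops T) (E : T -> Prop) :
  is_RA o -> ra_integral o -> ra_symmetric o ->
  is_subRA o E -> sub_atom o E (ra_id o) ->
  forall n : nat,
  exists B : set (set (catom (div_atom o))),
    is_subalg o E B /\
    atoms_of B =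
      [set X | X = cid o \/
               (exists (x : {x : T | div_atom o x}) (i : nat),
                   (i < n)%N /\ X = [set CX x i]) \/
               (exists a : T, div_atom o a /\ X = J o a n)].
Proof.
move=> hRA hI hS _ _ n.
have JCI : forall a, div_atom o a -> ~ J o a n CI.
  move=> a ha /=; exact: (e_not_le_div hRA hS hI ha).
have JCX : forall a x i, div_atom o a ->
    J o a n (CX x i) <-> proj1_sig x = a /\ (n <= i)%N.
  move=> a [x px] i ha /=; split.
  - move=> [hl hi]; split => //; apply: le_atom_eq hl; [exact: ha.1|exact: px.1].
  - move=> [-> hi]; split => //; rewrite /ra_le idem //.
have satJ : forall a, sat n (J o a n).
  by move=> a x i k hi hk /= [hl _].
exists (sat n); split.
  split.
  - by move=> x i k _ _ h; inversion h.
  - move=> X Y sX sY x i k hi hk [h|h]; [left; exact: sX h|right; exact: sY h].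
  - move=> X sX x i k hi hk h1 h2; apply: h1; exact: sX h2.
  - by [].
  - move=> X Y; exact: sat_comp.
rewrite boolp.predeqE => X; split.
- move=> [sX Xn0 Xmin].
  have [w Xw] : exists w, X w.
    apply: Classical_Prop.NNPP => hn; apply: Xn0; rewrite boolp.predeqE => w; split => // Xw.
    by apply: hn; exists w.
  case: w Xw => [|x i] Xw.
  + left; have sub : cid o `<=` X by move=> w /= ->.
    have scid : sat n (cid o) by move=> x i k _ _ h; inversion h.
    case: (Xmin _ scid sub) => [h|//].
    have : cid o CI by []. by rewrite h.
  + case: (ltnP i n) => hin.
    * right; left; exists x, i; split => //.
      have sub : [set CX x i] `<=` X by move=> w /= ->.
      have s1 : sat n [set CX x i].
        move=> y i' k hi hk /= h; inversion h; lia.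
      case: (Xmin _ s1 sub) => [h|//].
      have : [set CX x i] (CX x i) by []. by rewrite h.
    * right; right; exists (proj1_sig x); split; first exact: (proj2_sig x).
      have hx := proj2_sig x.
      have sub : J o (proj1_sig x) n `<=` X.
        case=> [|y k] hJ; first by case: (JCI _ hx hJ).
        case/(JCX _ _ _ hx): hJ => /sig_eq -> hk; exact: (sX x i k).
      case: (Xmin _ (satJ _) sub) => [h|//].
      have : J o (proj1_sig x) n (CX x i) by apply/(JCX _ _ _ hx).
      by rewrite h.
- case=> [->|[[x [i [hin ->]]]|[a [ha ->]]]].
  + split.
    * by move=> x i k _ _ h; inversion h.
    * move=> h; have : cid o CI by []. by rewrite h.
    * move=> Y _ sub; case: (boolp.pselect (Y CI)) => hY.
      -- right; rewrite boolp.predeqE => w; split; first exact: sub.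
         by move=> /= ->.
      -- left; rewrite boolp.predeqE => w; split => // Yw.
         have h : w = CI := sub _ Yw. by subst w.
  + split.
    * move=> y i' k hi hk /= h; inversion h; lia.
    * move=> h; have : [set CX x i] (CX x i) by []. by rewrite h.
    * move=> Y _ sub; case: (boolp.pselect (Y (CX x i))) => hY.
      -- right; rewrite boolp.predeqE => w; split; first exact: sub.
         by move=> /= ->.
      -- left; rewrite boolp.predeqE => w; split => // Yw.
         have h : w = CX x i := sub _ Yw. by subst w.
  + split; first exact: satJ.
    * move=> h.
      have : J o a n (CX (exist _ a ha) n) by apply/(JCX _ _ _ ha).
      by rewrite h.
    * move=> Y sY sub; case: (boolp.pselect (exists w, Y w)) => hY.
      -- right; case: hY => w Yw.
         have Jw := sub _ Yw.
         case: w Yw Jw => [|y k] Yw Jw; first by case: (JCI _ ha Jw).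
         case/(JCX _ _ _ ha): Jw => ya hk.
         rewrite boolp.predeqE => w; split; first exact: sub.
         case: w => [|y' k'] Jw; first by case: (JCI _ ha Jw).
         case/(JCX _ _ _ ha): Jw => y'a hk'.
         have -> : y' = y by apply: sig_eq; rewrite ya y'a.
         exact: (sY y k k').
      -- left; rewrite boolp.predeqE => w; split => // Yw.
         by apply: hY; exists w.
Qed.
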